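(* With notation as in the context (type $E_6$ over $\mathbb{Z}/3$), $\Gamma_6^+=\{(x_1,\dots,x_5)\in V: \prod_{i=1}^5x_i=1\}$, i.e. $\Gamma_6^+$ is the set of vectors with all coordinates nonzero and an even number of coordinates equal to $2$.
   Context: Let $V=(\mathbb{Z}/3)^5$ with the standard symmetric form $\sum_i x_iy_i$. Let $\Delta$ be the root system of type $E_6$ with simple roots $\alpha_1,\dots,\alpha_6$, $\langle\alpha_i,\alpha_i\rangle=2$, $\langle\alpha_i,\alpha_j\rangle=-1$ if $\{i,j\}\in\{\{1,3\},\{3,4\},\{4,5\},\{5,6\},\{2,4\}\}$, $0$ otherwise; $\Lambda=\bigoplus\mathbb{Z}\alpha_i$. Let $f:\Lambda\to V$ be the group homomorphism with $f(\alpha_1)=(1,2,0,0,0)$, $f(\alpha_2)=(0,0,0,1,2)$, $f(\alpha_3)=(0,1,2,0,0)$, $f(\alpha_4)=(0,0,1,2,0)$, $f(\alpha_5)=(0,0,0,1,1)$, $f(\alpha_6)=(1,1,1,1,1)$. Let $\Delta_6^+$ be the positive roots $\beta=\sum\beta^i\alpha_i$ with $\beta^6\ne0$, and $\Gamma_6^+=f(\Delta_6^+)$. *)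

(* Defs.v *)
From HB Require Import structures.
From mathcomp Require Import all_boot all_order all_algebra.
Set Implicit Arguments. Unset Strict Implicit. Unset Printing Implicit Defensive.
Import GRing.Theory.
Local Open Scope ring_scope.

Definition V := {ffun 'I_5 -> 'F_3}.

(* The root lattice Lambda = (+)_i Z alpha_i, elements are coefficient
   vectors beta = sum_i beta^i alpha_i, indices 0..5 standing for 1..6. *)
Definition Lam := {ffun 'I_6 -> int}.

(* Bilinear form on simple roots (Cartan matrix of E6, Bourbaki labelling):
   edges {1,3},{3,4},{4,5},{5,6},{2,4} (1-based) *)
Definition adjE6 (i j : nat) : bool :=
  [|| (i, j) == (0, 2), (i, j) == (2, 0), (i, j) == (2, 3), (i, j) == (3, 2),
      (i, j) == (3, 4), (i, j) == (4, 3), (i, j) == (4, 5), (i, j) == (5, 4),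
      (i, j) == (1, 3) | (i, j) == (3, 1)]%N.

Definition formE6 (i j : 'I_6) : int :=
  if i == j then 2 else if adjE6 i j then -1 else 0.

Definition pairing (b c : Lam) : int :=
  \sum_(i < 6) \sum_(j < 6) b i * c j * formE6 i j.

Definition alpha (i : 'I_6) : Lam := [ffun j => (i == j)%:R].

Definition refl (i : 'I_6) (b : Lam) : Lam :=
  [ffun j => b j - pairing b (alpha i) * alpha i j].

Inductive is_root : Lam -> Prop :=
| root_simple i : is_root (alpha i)
| root_refl i b : is_root b -> is_root (refl i b).

Definition positive (b : Lam) : bool := [forall i, 0 <= b i].

Definition fvec (a0 a1 a2 a3 a4 : 'F_3) : V :=
  [ffun k : 'I_5 => nth 0 [:: a0; a1; a2; a3; a4] k].

Definition f_alpha (i : 'I_6) : V :=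
  match val i with
  | 0 => fvec 1 2 0 0 0
  | 1 => fvec 0 0 0 1 2
  | 2 => fvec 0 1 2 0 0
  | 3 => fvec 0 0 1 2 0
  | 4 => fvec 0 0 0 1 1
  | _ => fvec 1 1 1 1 1
  end%R.

Definition f (b : Lam) : V := \sum_(i < 6) f_alpha i *~ b i.

Definition Gamma6plus (x : V) : Prop :=
  exists b : Lam, [/\ is_root b, positive b, b ord_max != 0 & f b = x].

(* Main.v *)
Require Import Defs.
From mathcomp Require Import all_boot all_order all_algebra.
Import GRing.Theory.
Local Open Scope ring_scope.

Definition formN (i j : nat) : int :=
  if (i == j)%N then 2 else if adjE6 i j then -1 else 0.
Definition sumS (l : seq int) : int := foldr (fun a b => a + b) 0 l.
Definition pairS (s : seq int) (i : nat) : int :=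
  foldr (fun j acc => nth 0 s j * formN j i + acc) 0 (iota 0 6).
Definition reflS (i : nat) (s : seq int) : seq int :=
  [seq nth 0 s j - (if (j == i)%N then pairS s i else 0) | j <- iota 0 6].
Definition unitS (i : nat) : seq int := [seq ((i == j)%N)%:R | j <- iota 0 6].
Definition evalw (p : nat * seq nat) : seq int := foldr reflS (unitS p.1) p.2.
Definition Lw : seq (nat * seq nat) := [:: (0, [:: ]); (1, [:: ]); (2, [:: ]); (3, [:: ]); (4, [:: ]); (5, [:: ]); (0, [:: 0]); (0, [:: 2]); (1, [:: 1]); (1, [:: 3]); (2, [:: 2]); (2, [:: 3]); (3, [:: 3]); (3, [:: 4]); (4, [:: 4]); (4, [:: 5]); (5, [:: 5]); (0, [:: 2 ; 0]); (0, [:: 3 ; 2]); (1, [:: 3 ; 1]); (1, [:: 2 ; 3]); (1, [:: 4 ; 3]); (2, [:: 3 ; 2]); (2, [:: 4 ; 3]); (3, [:: 4 ; 3]); (3, [:: 5 ; 4]); (4, [:: 5 ; 4]); (0, [:: 3 ; 2 ; 0]); (0, [:: 1 ; 3 ; 2]); (0, [:: 4 ; 3 ; 2]); (1, [:: 2 ; 3 ; 1]); (1, [:: 4 ; 3 ; 1]); (1, [:: 4 ; 2 ; 3]); (1, [:: 5 ; 4 ; 3]); (2, [:: 4 ; 3 ; 2]); (2, [:: 5 ; 4 ; 3]); (3, [:: 5 ; 4 ; 3]); (0, [:: 1 ; 3 ; 2 ; 0]); (0, [:: 4 ; 3 ; 2 ; 0]); (0, [:: 4 ; 1 ; 3 ;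 2]); (0, [:: 5 ; 4 ; 3 ; 2]); (1, [:: 4 ; 2 ; 3 ; 1]); (1, [:: 5 ; 4 ; 3 ; 1]); (1, [:: 3 ; 4 ; 2 ; 3]); (1, [:: 5 ; 4 ; 2 ; 3]); (2, [:: 5 ; 4 ; 3 ; 2]); (0, [:: 4 ; 1 ; 3 ; 2 ; 0]); (0, [:: 5 ; 4 ; 3 ; 2 ; 0]); (0, [:: 3 ; 4 ; 1 ; 3 ; 2]); (0, [:: 5 ; 4 ; 1 ; 3 ; 2]); (1, [:: 3 ; 4 ; 2 ; 3 ; 1]); (1, [:: 5 ; 4 ; 2 ; 3 ; 1]); (1, [:: 5 ; 3 ; 4 ; 2 ; 3]); (0, [:: 3 ; 4 ; 1 ; 3 ; 2 ; 0]); (0, [:: 5 ; 4 ; 1 ; 3 ; 2 ; 0]); (0, [:: 2 ; 3 ; 4 ; 1 ; 3 ; 2]); (0, [:: 5 ; 3 ; 4 ; 1 ; 3 ; 2]); (1, [:: 5 ; 3 ; 4 ; 2 ; 3 ; 1]); (1, [:: 4 ; 5 ; 3 ; 4 ; 2 ; 3]); (0, [:: 2 ; 3 ; 4 ; 1 ; 3 ; 2 ; 0]); (0, [:: 5 ; 3 ; 4 ; 1 ; 3 ; 2 ; 0]); (0, [:: 5 ; 2 ; 3 ; 4 ; 1 ; 3 ; 2]); (0, [:: 4 ; 5 ; 3 ; 4 ; 1 ; 3 ; 2]); (1, [:: 4 ; 5 ; 3 ; 4 ; 2 ; 3 ; 1]); (0, [:: 5 ; 2 ; 3 ; 4 ;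 1 ; 3 ; 2 ; 0]); (0, [:: 4 ; 5 ; 3 ; 4 ; 1 ; 3 ; 2 ; 0]); (0, [:: 4 ; 5 ; 2 ; 3 ; 4 ; 1 ; 3 ; 2]); (0, [:: 4 ; 5 ; 2 ; 3 ; 4 ; 1 ; 3 ; 2 ; 0]); (0, [:: 3 ; 4 ; 5 ; 2 ; 3 ; 4 ; 1 ; 3 ; 2]); (0, [:: 3 ; 4 ; 5 ; 2 ; 3 ; 4 ; 1 ; 3 ; 2 ; 0]); (0, [:: 1 ; 3 ; 4 ; 5 ; 2 ; 3 ; 4 ; 1 ; 3 ; 2]); (0, [:: 1 ; 3 ; 4 ; 5 ; 2 ; 3 ; 4 ; 1 ; 3 ; 2 ; 0])].
Definition L := map evalw Lw.

Definition fA (n : nat) : seq 'F_3 :=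
  match n with
  | 0 => [:: 1; 2; 0; 0; 0]
  | 1 => [:: 0; 0; 0; 1; 2]
  | 2 => [:: 0; 1; 2; 0; 0]
  | 3 => [:: 0; 0; 1; 2; 0]
  | 4 => [:: 0; 0; 0; 1; 1]
  | _ => [:: 1; 1; 1; 1; 1]
  end%R.
Definition fS (s : seq int) : seq 'F_3 :=
  [seq foldr (fun j acc => nth 0 (fA j) k *~ nth 0 s j + acc) 0 (iota 0 6) | k <- iota 0 5].
Definition prodS (w : seq 'F_3) : 'F_3 := foldr (fun a b => a * b) 1 w.
Definition goodS (s : seq int) : bool := all (fun z => 0 <= z) s && (nth 0 s 5 != 0).

Definition r3 : seq 'F_3 := [:: 0; 1; 2].
Fixpoint cube (n : nat) : seq (seq 'F_3) :=
  if n is n'.+1 then [seq a :: w | a <- r3, w <- cube n'] else [:: [::]].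

Lemma closedL : all (fun s => all (fun i => reflS i s \in L) (iota 0 6)) L.
Proof. vm_compute. reflexivity. Qed.
Lemma unitL : all (fun i => unitS i \in L) (iota 0 6).
Proof. vm_compute. reflexivity. Qed.
Lemma wordsOK : all (fun p => (p.1 < 6)%N && all (fun j => (j < 6)%N) p.2) Lw.
Proof. vm_compute. reflexivity. Qed.
Lemma goodL : all (fun s => goodS s ==> (prodS (fS s) == 1)) L.
Proof. vm_compute. reflexivity. Qed.
Lemma cubeOK : let G := [seq fS s | s <- L & goodS s] in
  all (fun v => ((prodS v == 1) == (all (fun a => a != 0) v && ~~ odd (count (fun a => a == 2) v)))
   && ((prodS v != 1) || (v \in G))) (cube 5).
Proof. vm_compute. reflexivity. Qed.

Lemma sizeL : all (fun s => size s == 6%N) L.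
Proof. vm_compute. reflexivity. Qed.

Definition mk (s : seq int) : Lam := [ffun j : 'I_6 => nth 0 s j].
Definition mkV (w : seq 'F_3) : V := [ffun k : 'I_5 => nth 0 w k].
Definition vec (x : V) : seq 'F_3 := map x (enum 'I_5).

Lemma alpha_mk i : alpha i = mk (unitS i).
Proof.
apply/ffunP=> j; rewrite !ffunE (nth_map 0%N) ?size_iota // nth_iota //.
Qed.

Lemma pairing_alpha b i : pairing b (alpha i) = \sum_(j < 6) b j * formE6 j i.
Proof.
rewrite /pairing; apply: eq_bigr => j _.
rewrite (bigD1 i) //= big1 ?addr0; first by rewrite ffunE eqxx mulr1.
by move=> k /negbTE ki; rewrite ffunE eq_sym ki mulr0 mul0r.
Qed.

Lemma pairing_mk s (i : 'I_6) : pairing (mk s) (alpha i) = pairS s i.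
Proof.
rewrite pairing_alpha.
transitivity (\sum_(j < 6) (nth 0 s (nat_of_ord j) * formN (nat_of_ord j) i) : int).
  by apply: eq_bigr => j _; rewrite ffunE.
rewrite -(big_mkord xpredT (fun j => nth 0 s j * formN j i)) unlock.
reflexivity.
Qed.

Lemma refl_mk (i : 'I_6) s : refl i (mk s) = mk (reflS i s).
Proof.
apply/ffunP => j; rewrite !ffunE pairing_mk (nth_map 0%N) ?size_iota // nth_iota // add0n.
have -> : ((j : nat) == i) = (i == j) by rewrite eq_sym.
by case: (i == j); rewrite ?mulr1 ?mulr0 ?subr0.
Qed.

Lemma is_root_L b : is_root b -> exists2 s, s \in L & b = mk s.
Proof.
elim=> [i|i {}b _ [s sL ->]].
  exists (unitS i); last exact: alpha_mk.
  by apply: (allP unitL); rewrite mem_iota /=.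
exists (reflS i s); last exact: refl_mk.
by apply: (allP (allP closedL s sL)); rewrite mem_iota /=.
Qed.

Lemma word_root p : (p.1 < 6)%N -> all (fun j => j < 6)%N p.2 -> is_root (mk (evalw p)).
Proof.
case: p => i w /= Hi; elim: w => [_|j w IH] /=.
  by have := root_simple (Ordinal Hi); rewrite alpha_mk.
move/andP=> [Hj Hw]; have := root_refl (Ordinal Hj) (IH Hw).
by rewrite refl_mk.
Qed.

Lemma L_root s : s \in L -> is_root (mk s).
Proof.
case/mapP=> p pL ->; have /andP[H1 H2] := allP wordsOK p pL.
exact: word_root.
Qed.

Lemma f_mk s : f (mk s) = mkV (fS s).
Proof.
apply/ffunP => k; rewrite /f sum_ffunE !ffunE.
rewrite (nth_map 0%N) ?size_iota // nth_iota // add0n.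
transitivity (\sum_(i < 6) (nth 0 (fA (nat_of_ord i)) k *~ nth 0 s (nat_of_ord i)) : 'F_3).
  apply: eq_bigr => i _; rewrite ffunMzE [mk s i]ffunE; congr (_ *~ _).
  by case: i => [[|[|[|[|[|[|n]]]]]] Hi] //=; rewrite ffunE.
rewrite -(big_mkord xpredT (fun i => nth 0 (fA i) k *~ nth 0 s i)) unlock.
reflexivity.
Qed.

Lemma prod_vec (x : V) : \prod_(i < 5) x i = prodS (vec x).
Proof. by rewrite /prodS /vec foldrE big_map big_enum. Qed.

Lemma card_vec (x : V) : #|[set i | x i == 2]| = count (fun a => a == 2) (vec x).
Proof. rewrite cardsE cardE /vec count_map size_filter enumT; exact: eq_count. Qed.

Lemma all_vec (x : V) : (forall i, x i != 0) <-> all (fun a => a != 0) (vec x).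
Proof.
split=> [H|/allP H i]; first by apply/allP => a /mapP [i _ ->].
by apply: H; apply: map_f; rewrite mem_enum.
Qed.

Lemma mkV_vec x : mkV (vec x) = x.
Proof. by apply/ffunP => k; rewrite ffunE /vec (nth_map ord0) ?size_enum_ord // nth_ord_enum. Qed.

Lemma vec_mkV w : size w = 5%N -> vec (mkV w) = w.
Proof.
move=> Hw; apply: (@eq_from_nth _ 0); rewrite /vec size_map size_enum_ord // => i Hi.
by rewrite (nth_map ord0) ?size_enum_ord // ffunE nth_enum_ord.
Qed.

Lemma in_r3 (a : 'F_3) : a \in r3.
Proof. by case: a => [[|[|[|n]]] H]. Qed.

Lemma in_cube w : all (fun a => a \in r3) w -> w \in cube (size w).
Proof.
elim: w => [|a w IH] // /andP [Ha Hw].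
change (a :: w \in [seq a :: w | a <- r3, w <- cube (size w)]).
by apply/allpairsP; exists (a, w); split => //; apply: IH.
Qed.

Lemma vec_cube x : vec x \in cube 5.
Proof.
have <- : size (vec x) = 5%N by rewrite size_map size_enum_ord.
by apply: in_cube; apply/allP => a _; apply: in_r3.
Qed.

Theorem mainTheorem15 :
  forall x : V,
    (Gamma6plus x <-> \prod_(i < 5) x i = 1) /\
    (\prod_(i < 5) x i = 1 <->
       ((forall i, x i != 0) /\ ~~ odd #|[set i | x i == 2]|)).
Proof.
move=> x.
have := cubeOK; cbv zeta => /allP /(_ _ (vec_cube x)) /andP [/eqP E1 E2].
rewrite prod_vec card_vec.
split; last first.
  split => [/eqP|[Ha Hc]].
    by rewrite E1 => /andP [Ha Hc]; split => //; apply/all_vec.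
  by apply/eqP; rewrite E1 (proj1 (all_vec x) Ha) Hc.
split.
  case=> b [Hr Hpos Hb5 <-].
  have [s sL Eb] := is_root_L _ Hr; subst b.
  have Hs : size s = 6%N by apply/eqP; exact: (allP sizeL s sL).
  have Hg : goodS s.
    apply/andP; split.
      apply/(all_nthP 0) => j; rewrite Hs => Hj.
      by have := forallP Hpos (Ordinal Hj); rewrite ffunE.
    by move: Hb5; rewrite ffunE.
  rewrite f_mk vec_mkV; last by rewrite size_map size_iota.
  by apply/eqP; exact: (implyP (allP goodL s sL) Hg).
move=> /eqP Hp; move: E2; rewrite Hp orFb => /mapP [s]; rewrite mem_filter.
case/andP => Hg sL Hv.
have Hs : size s = 6%N by apply/eqP; exact: (allP sizeL s sL).
case/andP: Hg => Hnn H5.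
exists (mk s); split.
- exact: L_root.
- apply/forallP => j; rewrite ffunE; apply: (allP Hnn); apply: mem_nth.
  by rewrite Hs.
- by rewrite ffunE.
- by rewrite f_mk -Hv mkV_vec.
Qed.
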